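(* Let $G=(\mathcal V,\mathcal H,\nu,\iota;\mathcal S,\mu,\sigma_1,\sigma_2)$ be a 2-graph. Define the set of cells $\mathcal C_G:=\mathcal V\cup(\mathcal E\cup\mathcal E^{\mathrm{ext}})\cup\mathcal F$ with dimension $0$ for vertices, $1$ for (internal or external) edges and $2$ for faces, and the relation $<$ given by: for $v\in\mathcal V$, $e\in\mathcal E\cup\mathcal E^{\mathrm{ext}}$, $f\in\mathcal F$, $v<e$ iff there is $h\in e$ with $\nu(h)=v$; $e<f$ iff there are $h\in e$ and $s$ occurring in $f$ with $\mu(s)=h$; $v<f$ iff there is an $e$ with $v<e<f$. Then $\mathcal C_G$ is a pure complex in the sense of Reidemeister. If moreover $\nu^{-1}(v)\neq\emptyset$ for every $v\in\mathcal V$ and $\mu^{-1}(h)\neq\emptyset$ for every $h\in\mathcal H$, then $\mathcal C_G$ is a 2-dimensional complex.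
   Context: A 2-graph is a tuple $(\mathcal V,\mathcal H,\nu,\iota;\mathcal S,\mu,\sigma_1,\sigma_2)$ of finite sets $\mathcal V$ (vertices), $\mathcal H$ (half-edges), $\mathcal S$ (strand sections), maps $\nu:\mathcal H\to\mathcal V$, $\mu:\mathcal S\to\mathcal H$, an involution $\iota$ of $\mathcal H$, a fixed-point free involution $\sigma_1$ of $\mathcal S$ with $\nu\circ\mu\circ\sigma_1=\nu\circ\mu$, and an involution $\sigma_2$ of $\mathcal S$ with $\iota\circ\mu=\mu\circ\sigma_2$ such that $s$ is fixed by $\sigma_2$ iff $\mu(s)$ is fixed by $\iota$. The (internal) edges $\mathcal E$ are the two-element orbits $\{h,\iota(h)\}$; the external half-edges are the fixed points of $\iota$, and the external edges are $\mathcal E^{\mathrm{ext}}=\{\{h\}: \iota(h)=h\}$. Faces: a tuple $(s_1,\dots,s_{2n})$ of distinct strand sections with $s_{2i}=\sigma_1(s_{2i-1})$ and $s_{2i+1}=\sigma_2(s_{2i})$ is an external face if $s_1$ and $s_{2n}$ are fixed points of $\sigma_2$; if instead $\sigma_2(s_{2n})=s_1$, its equivalence class under cyclic shifts $s_i\mapsto s_{i+2}$ is an internal face; $\mathcal F$ is the set of all external and internal faces (''$s$ occurs in $f$'' is independent of the representative). A complex in the sense of Reidemeister is a set $\mathcal C$ of cells with a dimension map $\dim:\mathcal C\to\mathbb N$ and a partial order $\le$ such that whenever $c>c''$ and $\dim c-\dim c''>1$ there is $c'$ with $c>c'>c''$. It is pure if every cell of nonzero dimension is $>$ some 0-cell.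 It is $n$-dimensional if $n$ is the maximal dimension of its cells and every cell is $\le$ some $n$-cell. *)

(* Defs.v *)
From mathcomp Require Import all_boot.
Set Implicit Arguments. Unset Strict Implicit. Unset Printing Implicit Defensive.

Record two_graph := TwoGraph {
  V : finType;
  H : finType;
  S : finType;
  nu : H -> V;
  iota : H -> H;
  mu : S -> H;
  sigma1 : S -> S;
  sigma2 : S -> S;
  iota_invol : forall h, iota (iota h) = h;
  sigma1_invol : forall s, sigma1 (sigma1 s) = s;
  sigma1_fpf : forall s, sigma1 s <> s;
  nu_mu_sigma1 : forall s, nu (mu (sigma1 s)) = nu (mu s);
  sigma2_invol : forall s, sigma2 (sigma2 s) = s;
  iota_mu : forall s, iota (mu s) = mu (sigma2 s);
  sigma2_fix : forall s, sigma2 s = s <-> iota (mu s) = mu s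
}.

Section Cells.
Variable G : two_graph.

Definition is_int_edge (e : {set H G}) : Prop :=
  exists h, iota h <> h /\ e = [set h; iota h].
Definition is_ext_edge (e : {set H G}) : Prop :=
  exists h, iota h = h /\ e = [set h].
Definition edge := {e : {set H G} | is_int_edge e \/ is_ext_edge e}.

(* Face tuples (s_1, ..., s_{2n}), 0-indexed as t`_0 ... t`_(2n-1). *)
Definition face_tuple_shape (t : seq (S G)) : Prop :=
  [/\ 0 < size t, ~~ odd (size t), uniq t,
      (forall i, i.*2.+1 < size t ->
         onth t i.*2.+1 = omap (@sigma1 G) (onth t i.*2)) &
      (forall i, i.*2.+2 < size t ->
         onth t i.*2.+2 = omap (@sigma2 G) (onth t i.*2.+1))].

Definition is_ext_face (t : seq (S G)) : Prop :=
  [/\ face_tuple_shape t,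
      omap (@sigma2 G) (onth t 0) = onth t 0 &
      omap (@sigma2 G) (onth t (size t).-1) = onth t (size t).-1].

Definition is_int_face (t : seq (S G)) : Prop :=
  face_tuple_shape t /\ omap (@sigma2 G) (onth t (size t).-1) = onth t 0.

Definition face_class (t : seq (S G)) : seq (S G) -> Prop :=
  fun t' => t' = t \/ (is_int_face t /\ exists k, t' = rot k.*2 t).

Definition face :=
  {P : seq (S G) -> Prop | exists t, (is_ext_face t \/ is_int_face t) /\ P = face_class t}.

Definition occurs (s : S G) (f : face) : Prop :=
  exists t, proj1_sig f t /\ s \in t.

Inductive cell : Type :=
| CV of V G
| CE of edge
| CF of face.

Definition cell_dim (c : cell) : nat :=
  match c with CV _ => 0 | CE _ => 1 | CF _ => 2 end.

Definition v_lt_e (v : V G) (e : edge) : Prop :=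
  exists h, h \in proj1_sig e /\ nu h = v.
Definition e_lt_f (e : edge) (f : face) : Prop :=
  exists h s, [/\ h \in proj1_sig e, occurs s f & mu s = h].

Definition cell_lt (c c' : cell) : Prop :=
  match c, c' with
  | CV v, CE e => v_lt_e v e
  | CE e, CF f => e_lt_f e f
  | CV v, CF f => exists e, v_lt_e v e /\ e_lt_f e f
  | _, _ => False
  end.

Definition cell_le (c c' : cell) : Prop := c = c' \/ cell_lt c c'.

End Cells.

Section Complex.
Variables (C : Type) (dim : C -> nat) (le : C -> C -> Prop).

Definition strict (c c' : C) : Prop := le c c' /\ c <> c'.

Definition reidemeister_complex : Prop :=
  [/\ (forall c, le c c),
      (forall c c', le c c' -> le c' c -> c = c'),
      (forall c1 c2 c3, le c1 c2 -> le c2 c3 -> le c1 c3) &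
      (forall c c'', strict c'' c -> 1 < dim c - dim c'' ->
         exists c', strict c' c /\ strict c'' c')].

Definition pure_complex : Prop :=
  reidemeister_complex /\
  (forall c, dim c <> 0 -> exists c0, dim c0 = 0 /\ strict c0 c).

Definition n_dimensional_complex (n : nat) : Prop :=
  [/\ reidemeister_complex,
      (forall c, dim c <= n) &
      (forall c, exists c', dim c' = n /\ le c c')].
End Complex.

(* Main.v *)
Require Import Defs.
From mathcomp Require Import all_boot.
From Stdlib Require Import Classical.
From mathcomp Require Import zify.
Set Implicit Arguments. Unset Strict Implicit. Unset Printing Implicit Defensive.

Section Proofs.
Variable G : two_graph.
Local Notation s1 := (@sigma1 G).
Local Notation s2 := (@sigma2 G).
Definition phi (x : S G) := s2 (s1 x).
Definition psi (x : S G) := s1 (s2 x).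
Lemma phiK x : phi (psi x) = x.
Proof. by rewrite /phi /psi sigma1_invol sigma2_invol. Qed.
Lemma s1_inj : injective s1. Proof. exact: can_inj (@sigma1_invol G). Qed.
Lemma s2_inj : injective s2. Proof. exact: can_inj (@sigma2_invol G). Qed.
Lemma phi_inj : injective phi. Proof. by move=> x y /s2_inj /s1_inj. Qed.

Definition valid (a : nat -> S G) m := forall i j, i < m -> j < m ->
  (a i = a j -> i = j) /\ s1 (a i) <> a j.

Lemma valid_card a m : valid a m -> m <= #|S G|.
Proof.
move=> v. have inj : injective (fun i : 'I_m => a i).
  move=> i j /= e; apply: val_inj; exact: (proj1 (v i j (ltn_ord i) (ltn_ord j)) e).
by have := leq_card _ inj; rewrite card_ord.
Qed.

Lemma valid_ext a m : valid a m -> ~ valid a m.+1 ->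
  exists2 j, j < m & (a m = a j \/ a m = s1 (a j)).
Proof.
move=> v nv; apply: NNPP => nex; apply: nv => i j.
rewrite !ltnS [i <= m]leq_eqVlt [j <= m]leq_eqVlt => /orP[/eqP-> | im] /orP[/eqP-> | jm].
- by split=> //; exact: sigma1_fpf.
- split=> e; exfalso; apply: nex; exists j => //;
    [left | right; rewrite -e sigma1_invol] => //.
- split=> e; exfalso; apply: nex; exists i => //;
    [left; rewrite e | right; rewrite -e] => //.
- exact: v.
Qed.

Lemma valid_front a b m : (forall i, b i.+1 = a i) -> valid a m -> ~ valid b m.+1 ->
  exists2 j, j < m & (b 0 = a j \/ b 0 = s1 (a j)).
Proof.
move=> bS v nv; apply: NNPP => nex; apply: nv => i j.
case: i => [|i]; case: j => [|j] //= hi hj; rewrite ?bS.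
- by split=> //; exact: sigma1_fpf.
- split=> e; exfalso; apply: nex; exists j => //;
    [left | right; rewrite -e sigma1_invol] => //.
- split=> e; exfalso; apply: nex; exists i => //;
    [left; rewrite e | right; rewrite -e] => //.
- have [h1 h2] := v i j hi hj; split=> // e; by rewrite (h1 e).
Qed.

Definition A y i := iter i phi y.
Lemma AS y i : A y i.+1 = phi (A y i). Proof. by []. Qed.
Lemma A_psi y i : A (psi y) i.+1 = A y i.
Proof. by rewrite /A iterSr phiK. Qed.

Definition P s y m := valid (A y) m /\ exists2 i, i < m & A y i = s.

Lemma maximal s : exists y m, [/\ P s y m, ~ valid (A y) m.+1 & ~ valid (A (psi y)) m.+1].
Proof.
suff: forall n m y, #|S G| - m <= n -> P s y m ->
   exists y m, [/\ P s y m, ~ valid (A y) m.+1 & ~ valid (A (psi y)) m.+1].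
  move=> Hm; apply: (Hm #|S G| 1 s); first exact: leq_subr.
  split; last by exists 0.
  move=> i j; rewrite !ltnS !leqn0 => /eqP-> /eqP->.
  by split=> //; exact: sigma1_fpf.
elim=> [|n IH] m y hle [v [i im ei]].
- exists y, m; split=> //; first by split=> //; exists i.
  + by move/valid_card => h; lia.
  + by move/valid_card => h; lia.
- case: (classic (valid (A y) m.+1)) => [vf|nvf].
    apply: (IH m.+1 y); first by have := valid_card vf; lia.
    by split=> //; exists i => //; apply: ltnW.
  case: (classic (valid (A (psi y)) m.+1)) => [vb|nvb].
    apply: (IH m.+1 (psi y)); first by have := valid_card vb; lia.
    by split=> //; exists i.+1; rewrite ?A_psi.
  by exists y, m; split=> //; split=> //; exists i.
Qed.

Lemma classify y m : valid (A y) m -> 0 < m -> ~ valid (A y) m.+1 -> ~ valid (A (psi y)) m.+1 ->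
  A y m = y \/ (s2 (s1 (A y m.-1)) = s1 (A y m.-1) /\ s2 y = y).
Proof.
move=> v m0 nf nb.
case: m m0 v nf nb => [//|m] _ v nf nb /=.
have [j jm [e|e]] := valid_ext v nf.
- left; case: j jm e => [//|j] jm.
  rewrite !AS => /phi_inj e.
  by have := proj1 (v m j (leqnn _) (ltnW jm)) e; lia.
- have hj : j = m.
    apply: NNPP => ne.
    have := proj2 (v m j.+1 (leqnn _) (ltac:(lia))).
    rewrite AS /phi -e AS /phi sigma2_invol; by [].
  subst j.
  have [k km [e2|e2]] := valid_front (A_psi y) v nb.
  + left. have : phi (A (psi y) 0) = phi (A y k) by rewrite e2.
    rewrite /= phiK -AS => e3.
    have : k.+1 = m.+1.
      apply: NNPP => ne.
      have := proj1 (v 0 k.+1 ltac:(lia) ltac:(lia)); rewrite -e3 /= => h.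
      by have := h erefl.
    by move=> [ek]; subst k; exact: (esym e3).
  + right; split; first exact: e.
    move: e2; rewrite /= /psi => /s1_inj; case: k km => [//|k] km.
    rewrite AS /phi => /s2_inj e4.
    by have := proj2 (v k 0 (ltnW km) ltac:(lia)); rewrite -e4.
Qed.

Definition g (a : nat -> S G) k := if odd k then s1 (a k./2) else a k./2.
Definition tup a m := mkseq (g a) m.*2.

Lemma onth_tup a m k : onth (tup a m) k = if k < m.*2 then Some (g a k) else None.
Proof.
rewrite onthE /tup; case: ltnP => h.
  by rewrite (nth_map (g a 0)) ?size_mkseq // (nth_mkseq _ _ h).
by rewrite nth_default // size_map size_mkseq.
Qed.

Lemma g_even a i : g a i.*2 = a i.
Proof. by rewrite /g odd_double half_double. Qed.
Lemma g_odd a i : g a i.*2.+1 = s1 (a i).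
Proof. by rewrite /g /= odd_double /= uphalf_double. Qed.

Lemma tup_shape y m : 0 < m -> valid (A y) m -> face_tuple_shape (tup (A y) m).
Proof.
move=> m0 v; split.
- by rewrite size_mkseq; lia.
- by rewrite size_mkseq odd_double.
- rewrite /tup /mkseq map_inj_in_uniq ?iota_uniq // => k l.
  rewrite !mem_iota !add0n => /andP[_ hk] /andP[_ hl].
  have hk2 : k./2 < m by move: hk; rewrite -[k]odd_double_half; case: odd => /=; lia.
  have hl2 : l./2 < m by move: hl; rewrite -[l]odd_double_half; case: odd => /=; lia.
  have [e1 e2] := v _ _ hk2 hl2.
  have [e3 e4] := v _ _ hl2 hk2.
  move=> E; suff : odd k = odd l /\ k./2 = l./2.
    by case=> o h; rewrite -[k]odd_double_half -[l]odd_double_half o h.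
  move: E; rewrite /g; case: (odd k); case: (odd l) => e.
  + by split; [|apply: e1; exact: s1_inj e].
  + by exfalso; apply: e2.
  + by exfalso; apply: e4; rewrite e.
  + by split; [|exact: e1 e].
- move=> i; rewrite size_mkseq => hi; rewrite !onth_tup hi.
  have -> : i.*2 < m.*2 by lia.
  by rewrite g_odd g_even.
- move=> i; rewrite size_mkseq => hi; rewrite !onth_tup hi.
  have -> : i.*2.+1 < m.*2 by lia.
  by rewrite -doubleS g_odd g_even AS.
Qed.

Lemma tup_last a m : 0 < m -> onth (tup a m) (size (tup a m)).-1 = Some (s1 (a m.-1)).
Proof.
case: m => [//|m] _; rewrite size_mkseq onth_tup doubleS /=.
by rewrite ltnSn g_odd.
Qed.

Lemma tup_first a m : 0 < m -> onth (tup a m) 0 = Some (a 0).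
Proof. by move=> m0; rewrite onth_tup; case: m m0. Qed.

Lemma face_exists (s : S G) : exists f : face G, occurs s f.
Proof.
have [y [m [[v [i im ei]] nf nb]]] := maximal s.
have m0 : 0 < m by lia.
have sh := tup_shape m0 v.
have hf : is_ext_face (tup (A y) m) \/ is_int_face (tup (A y) m).
  case: (classify v m0 nf nb) => [e|[e1 e2]].
  - right; split=> //; rewrite tup_last // tup_first //=.
    by case: m m0 {im sh v nf nb} e => [//|m] _ e; congr Some; exact: e.
  - by left; split=> //; rewrite ?tup_last ?tup_first //= ?e1 ?e2.
exists (exist _ (face_class (tup (A y) m)) (ex_intro _ _ (conj hf erefl))).
exists (tup (A y) m); split; first by left.
apply/onthP; exists i.*2; rewrite onth_tup.
have -> : i.*2 < m.*2 by lia.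
by rewrite g_even ei.
Qed.

Lemma edge_exists (h : H G) : exists e : edge G, h \in proj1_sig e.
Proof.
case: (eqVneq (Defs.iota h) h) => e.
- have p : is_int_edge [set h] \/ is_ext_edge [set h] by right; exists h.
  by exists (exist (fun e => is_int_edge e \/ is_ext_edge e) _ p); rewrite /= set11.
- have p : is_int_edge [set h; Defs.iota h] \/ is_ext_edge [set h; Defs.iota h].
    by left; exists h; split=> //; apply/eqP.
  by exists (exist (fun e => is_int_edge e \/ is_ext_edge e) _ p); rewrite /= set21.
Qed.

Lemma edge_has (e : edge G) : exists h, h \in proj1_sig e.
Proof.
case: e => e p /=; case: p => [[h [_ E]]|[h [_ E]]]; exists h; by rewrite E ?set21 ?set11.
Qed.

Lemma face_has (f : face G) : exists s, occurs s f.
Proof.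
case: f => P p; rewrite /occurs /=; case: p => t [ht ->].
have : 0 < size t by case: ht => [[[]]|[[]]].
case: t ht => [//|x t] ht _; exists x, (x :: t); split; first by left.
by rewrite inE eqxx.
Qed.

End Proofs.

Theorem mainTheorem2 (G : two_graph) :
  pure_complex (@cell_dim G) (@cell_le G) /\
  ((forall v : V G, exists h : H G, nu h = v) ->
   (forall h : H G, exists s : S G, mu s = h) ->
   n_dimensional_complex (@cell_dim G) (@cell_le G) 2).
Proof.
have rc : reidemeister_complex (@cell_dim G) (@cell_le G).
  split.
  - by move=> c; left.
  - move=> c c' [//|l1] [//|l2]; exfalso.
    by case: c c' l1 l2 => [x|x|x] [y|y|y].
  - move=> c1 c2 c3 [-> //|l1] [<-|l2]; first by right.
    right; case: c1 c2 c3 l1 l2 => [x|x|x] [y|y|y] [z|z|z] //= l1 l2.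
    by exists y.
  - move=> c c'' [[->//|l] ne] hd.
    case: c'' c l ne hd => [x|x|x] [y|y|y] //= [e [l1 l2]] _ _.
    exists (CE e); split; split=> //; by right.
split.
  split=> // c; case: c => [x|x|x] //= _.
  - have [h hh] := edge_has x; exists (CV (nu h)); split=> //; split=> //.
    by right; exists h.
  - have [s [t [ht st]]] := face_has x.
    have [e he] := edge_exists (mu s).
    exists (CV (nu (mu s))); split=> //; split=> //.
    right; exists e; split; first by exists (mu s).
    by exists (mu s), s; split=> //; exists t.
move=> hv hh; split=> //.
  by case.
case=> [x|x|x].
- have [h <-] := hv x; have [s <-] := hh h.
  have [e he] := edge_exists (mu s); have [f hf] := face_exists s.
  exists (CF f); split=> //; right; exists e; split; first by exists (mu s).
  by exists (mu s), s.
- have [h he] := edge_has x; have [s hs] := hh h; have [f hf] := face_exists s.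
  exists (CF f); split=> //; right; by exists h, s.
- by exists (CF x); split=> //; left.
Qed.
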